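(* Let $n\ge5$ and let $f(x)=x^n+a_2x^{n-2}+a_3x^{n-3}+\dots+a_{n-1}x+a_n$ be a polynomial (with zero coefficient of $x^{n-1}$) all of whose roots are real. Then $$\Big(\frac{24}{n}(a_2^2-2a_4)\Big)^{1/4}\le\operatorname{spn}(f)\le 2\,(a_2^2-2a_4)^{1/4}.$$
   Context: If $x_1,\dots,x_n$ are the roots of $f$, the span of $f$ is $\operatorname{spn}(f)=\max_{i,j}|x_i-x_j|$. *)

(* Defs.v *)
From mathcomp Require Import all_boot all_order all_algebra.
Set Implicit Arguments. Unset Strict Implicit. Unset Printing Implicit Defensive.
Import Order.TTheory GRing.Theory Num.Theory.
Local Open Scope ring_scope.

Definition spn_seq (R : realDomainType) (s : seq R) : R :=
  \big[Num.max/0]_(x <- s) \big[Num.max/0]_(y <- s) `|x - y|.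

Definition root4 (R : rcfType) (x : R) : R := Num.sqrt (Num.sqrt x).

(* Main.v *)
Require Import Defs.
From mathcomp Require Import all_boot all_order all_algebra.
From mathcomp Require Import ring lra.
Import Order.TTheory GRing.Theory Num.Theory.
Local Open Scope ring_scope.

Section Esym.
Variable R : comNzRingType.
Fixpoint esym (k : nat) (s : seq R) : R :=
  match s with
  | [::] => if k is 0%N then 1 else 0
  | x :: s' => if k is k'.+1 then esym k s' + x * esym k' s' else 1
  end.
End Esym.
Arguments esym {R}.

Lemma esym_big (R : comNzRingType) (s : seq R) k : (size s < k)%N -> esym k s = 0.
Proof.
elim: s k => [|x s IH] [|k] //= Hk.
by rewrite !IH ?mulr0 ?addr0 // ltnW.
Qed.

Lemma coef_esym (R : comNzRingType) (s : seq R) k : (k <= size s)%N ->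
  (\prod_(x <- s) ('X - x%:P))`_(size s - k) = (-1) ^+ k * esym k s.
Proof.
elim: s k => [|x s IH] k.
  by rewrite leqn0 => /eqP ->; rewrite big_nil coefC /= mulr1.
rewrite big_cons /= mulrBl coefB coefXM coefCM => Hk.
case: k Hk => [|k] Hk.
  rewrite subn0 /= -[X in _`_X - _](subn0 (size s)) IH // mulr1.
  rewrite (@nth_default _ 0 (\prod_(j <- s) ('X - j%:P))) ?size_prod_XsubC //.
  by case: (s) => [|? ?] /=; rewrite !expr0 !mulr1 mulr0 subr0.
rewrite subSS.
have [Hlt | Hge] := ltnP k (size s).
  have Hn : (size s - k)%N != 0%N by rewrite subn_eq0 -ltnNge.
  rewrite (negPf Hn) -subnS (IH k.+1 Hlt) (IH k (ltnW Hlt)) exprS; ring.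
have Ek : k = size s by apply/eqP; rewrite eqn_leq Hge -ltnS Hk.
have := IH _ (leqnn (size s)); rewrite subnn => H0.
rewrite Ek subnn /= H0 (@esym_big _ s (size s).+1 (ltnSn _)) exprS; ring.
Qed.

Lemma esym0 (R : comNzRingType) (s : seq R) : esym 0 s = 1.
Proof. by case: s. Qed.

Definition psum {R : comNzRingType} (k : nat) (s : seq R) := \sum_(x <- s) x ^+ k.

Lemma newton (R : comNzRingType) (s : seq R) :
  let E1 := esym 1 s in let E2 := esym 2 s in let E3 := esym 3 s in let E4 := esym 4 s in
  [/\ psum 1 s = E1, psum 2 s = E1^+2 - 2 * E2, psum 3 s = E1^+3 - 3*E1*E2 + 3*E3 &
   psum 4 s = E1^+4 - 4*E1^+2*E2 + 2*E2^+2 + 4*E1*E3 - 4*E4].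
Proof.
elim: s => [|x s [H1 H2 H3 H4]] /=; rewrite /psum ?big_nil ?big_cons.
  by split; rewrite ?expr0n /= ?mulr0 ?subr0 ?addr0.
rewrite /psum in H1 H2 H3 H4; rewrite H1 H2 H3 H4 esym0.
split; ring.
Qed.

Lemma sum_const_seq (R : realDomainType) (s : seq R) (c : R) :
  \sum_(x <- s) c = c * (size s)%:R.
Proof.
elim: s => [|x s IH]; first by rewrite big_nil mulr0.
by rewrite big_cons IH /= -addn1 natrD; ring.
Qed.

Lemma ler_sum_seq (R : realDomainType) (s : seq R) (F G : R -> R) :
  (forall x, x \in s -> F x <= G x) -> \sum_(x <- s) F x <= \sum_(x <- s) G x.
Proof. by move=> H; rewrite big_seq [X in _ <= X]big_seq; apply: ler_sum. Qed.

Lemma bigmax_ge (R : realDomainType) (s : seq R) (F : R -> R) x :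
  x \in s -> F x <= \big[Num.max/0]_(y <- s) F y.
Proof.
elim: s => [|z s IH] //; rewrite inE big_cons => /orP [/eqP -> | Hx].
  by rewrite le_max lexx.
by rewrite le_max IH ?orbT.
Qed.

Lemma bigmax_le (R : realDomainType) (s : seq R) (F : R -> R) c :
  0 <= c -> (forall x, x \in s -> F x <= c) -> \big[Num.max/0]_(y <- s) F y <= c.
Proof.
move=> Hc; elim: s => [|z s IH] H; first by rewrite big_nil.
rewrite big_cons ge_max H ?mem_head //= IH // => x Hx.
by apply: H; rewrite inE Hx orbT.
Qed.

Lemma exists_min (R : realDomainType) (s : seq R) : s != [::] ->
  exists2 m, m \in s & forall x, x \in s -> m <= x.
Proof.
elim: s => [|z s IH] // _.
case: (eqVneq s [::]) => [-> | /IH [m Hm Hmin]].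
  by exists z; rewrite ?mem_head // => x; rewrite inE => /eqP ->.
have [Hzm | Hmz] := leP z m.
  exists z; first exact: mem_head.
  move=> x; rewrite inE => /orP [/eqP -> // | Hx].
  exact: le_trans Hzm (Hmin x Hx).
exists m; first by rewrite inE Hm orbT.
move=> x; rewrite inE => /orP [/eqP -> | Hx]; last exact: Hmin.
exact: ltW.
Qed.

Lemma exists_max (R : realDomainType) (s : seq R) : s != [::] ->
  exists2 m, m \in s & forall x, x \in s -> x <= m.
Proof.
elim: s => [|z s IH] // _.
case: (eqVneq s [::]) => [-> | /IH [m Hm Hmin]].
  by exists z; rewrite ?mem_head // => x; rewrite inE => /eqP ->.
have [Hzm | Hmz] := leP m z.
  exists z; first exact: mem_head.
  move=> x; rewrite inE => /orP [/eqP -> // | Hx].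
  exact: le_trans (Hmin x Hx) Hzm.
exists m; first by rewrite inE Hm orbT.
move=> x; rewrite inE => /orP [/eqP -> | Hx]; last exact: Hmin.
exact: ltW.
Qed.

Lemma sum_ge1 (R : realDomainType) (s : seq R) (G : R -> R) x :
  (forall y, 0 <= G y) -> x \in s -> G x <= \sum_(y <- s) G y.
Proof.
move=> H0; elim: s => [|z s IH] //; rewrite inE big_cons => /orP [/eqP -> | Hx].
  rewrite lerDl; apply: sumr_ge0 => *; exact: H0.
have := IH Hx; have := H0 z; lra.
Qed.

Lemma sum_ge2 (R : realDomainType) (s : seq R) (G : R -> R) x y :
  (forall y, 0 <= G y) -> x \in s -> y \in s -> x != y ->
  G x + G y <= \sum_(z <- s) G z.
Proof.
move=> H0; elim: s => [|z s IH] //; rewrite !inE big_cons => Hx Hy Hxy.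
case: (eqVneq x z) Hx => [Exz _ | Nxz /= Hx].
  have Hy' : y \in s by move: Hy; rewrite -Exz eq_sym (negPf Hxy).
  rewrite -Exz lerD2l; exact: sum_ge1.
case: (eqVneq y z) Hy => [Eyz _ | Nyz /= Hy].
  rewrite -Eyz addrC lerD2l; exact: sum_ge1.
have := IH Hx Hy Hxy; have := H0 z; lra.
Qed.

Lemma root4_id {R : rcfType} (d : R) : 0 <= d -> Num.sqrt (Num.sqrt (d ^+ 4)) = d.
Proof.
move=> Hd; have -> : d ^+ 4 = (d ^+ 2) ^+ 2 by rewrite -exprM.
by rewrite sqrtr_sqr ger0_norm ?exprn_ge0 // sqrtr_sqr ger0_norm.
Qed.

Lemma root4_le (R : rcfType) (y d : R) : 0 <= d -> y <= d ^+ 4 ->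
  Num.sqrt (Num.sqrt y) <= d.
Proof.
move=> Hd Hy; rewrite -(root4_id _ Hd); do 2 apply: ler_wsqrtr => //.
Qed.

Lemma root4_ge (R : rcfType) (y d : R) : 0 <= d -> d ^+ 4 <= y ->
  d <= Num.sqrt (Num.sqrt y).
Proof.
move=> Hd Hy; rewrite -(root4_id _ Hd); do 2 apply: ler_wsqrtr => //.
Qed.

Theorem theorem4p1 (R : rcfType) (n : nat) (f : {poly R}) (s : seq R) :
  (5 <= n)%N ->
  size f = n.+1 -> f \is monic -> f`_(n - 1) = 0 ->
  f = \prod_(x <- s) ('X - x%:P) ->
  let a2 := f`_(n - 2) in
  let a4 := f`_(n - 4) in
  root4 (24 / n%:R * (a2 ^+ 2 - 2 * a4)) <= spn_seq s
  /\ spn_seq s <= 2 * root4 (a2 ^+ 2 - 2 * a4).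
Proof.
move=> Hn Hsz _ Hf1 Hf a2 a4.
have Hs : size s = n.
  by move: Hsz; rewrite Hf size_prod_XsubC => /eqP; rewrite eqSS => /eqP.
have Hc : forall k, (k <= n)%N -> f`_(n - k) = (-1) ^+ k * esym k s.
  by move=> k Hk; rewrite Hf -Hs; apply: coef_esym; rewrite Hs.
have E1 : esym 1 s = 0.
  by move: Hf1; rewrite Hc ?(leq_trans _ Hn) // expr1 mulN1r => /eqP; rewrite oppr_eq0 => /eqP.
have A2 : a2 = esym 2 s by rewrite /a2 Hc ?(leq_trans _ Hn) // sqrrN expr1n mul1r.
have A4 : a4 = esym 4 s.
  by rewrite /a4 Hc ?(leq_trans _ Hn) // (_ : (-1) ^+ 4 = 1 :> R) ?mul1r // -signr_odd.
have [P1 _ _ P4] := newton _ s.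
rewrite E1 in P1 P4.
have Key : a2 ^+ 2 - 2 * a4 = psum 4 s / 2.
  by rewrite P4 A2 A4; field.
have [P HP] : exists P, P = psum 4 s by eexists.
rewrite -HP in Key P4.
have Psum : \sum_(x <- s) x = 0.
  by rewrite -[RHS]P1 /psum; apply: eq_bigr => x _; rewrite expr1.
have sn0 : s != [::] by apply/eqP => E; move: Hs; rewrite E /= => E'; rewrite -E' in Hn.
have [m ms Hm] := exists_min _ _ sn0.
have [M Ms HM] := exists_max _ _ sn0.
have nR : 0 < (n%:R : R) by rewrite ltr0n (leq_trans _ Hn).
have m0 : m <= 0.
  have : \sum_(x <- s) m <= \sum_(x <- s) x by apply: ler_sum_seq.
  rewrite sum_const_seq Psum Hs; nra.
have M0 : 0 <= M.
  have : \sum_(x <- s) x <= \sum_(x <- s) M by apply: ler_sum_seq.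
  rewrite sum_const_seq Psum Hs; nra.
have P0 : 0 <= P by rewrite HP; apply: sumr_ge0 => x _; apply: exprn_even_ge0.
set D := M - m.
have D0 : 0 <= D by rewrite /D; lra.
have spn_lo : D <= spn_seq s.
  rewrite /spn_seq.
  apply: (le_trans _ (@bigmax_ge _ s (fun x => \big[Num.max/0]_(y <- s) `|x - y|) M Ms)).
  apply: (le_trans _ (@bigmax_ge _ s (fun y => `|M - y|) m ms)).
  by rewrite /D ler_norm.
have spn_hi : spn_seq s <= D.
  rewrite /spn_seq; apply: bigmax_le => // x Hx; apply: bigmax_le => // y Hy.
  rewrite ler_norml; have := Hm x Hx; have := HM x Hx; have := Hm y Hy; have := HM y Hy.
  rewrite /D; move=> *; apply/andP; split; lra.
set a := - m * M * (M ^+ 2 + M * m + m ^+ 2).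
set b := (M + m) * (M ^+ 2 + m ^+ 2).
have chord : forall x, x \in s -> x ^+ 4 <= a + b * x.
  move=> x Hx; have h1 := Hm x Hx; have h2 := HM x Hx.
  have q0 : 0 <= x ^+ 2 + (m + M) * x + (m ^+ 2 + m * M + M ^+ 2).
    have -> : x ^+ 2 + (m + M) * x + (m ^+ 2 + m * M + M ^+ 2) =
      ((2 * x + m + M) ^+ 2 + (m + M) ^+ 2 + 2 * m ^+ 2 + 2 * M ^+ 2) / 4 by field.
    apply: divr_ge0; last by lra.
    by rewrite !addr_ge0 // ?sqr_ge0 // mulr_ge0 // sqr_ge0.
  have p0 : 0 <= (x - m) * (M - x) by apply: mulr_ge0; lra.
  have E : a + b * x - x ^+ 4 = (x - m) * (M - x) * (x ^+ 2 + (m + M) * x + (m ^+ 2 + m * M + M ^+ 2)).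
    by rewrite /a /b; ring.
  by rewrite -subr_ge0 E; apply: mulr_ge0.
have Plo : P <= a * n%:R.
  have : \sum_(x <- s) x ^+ 4 <= \sum_(x <- s) (a + b * x) by apply: ler_sum_seq.
  move=> H; move: H; have Sb : \sum_(i <- s) b * i = b * \sum_(i <- s) i by rewrite mulr_sumr.
  by rewrite big_split /= Sb Psum sum_const_seq Hs HP /psum mulr0 addr0.
have aD : 12 * a <= D ^+ 4.
  have E : D ^+ 4 - 12 * a = ((M - m) ^+ 2 + 6 * m * M) ^+ 2 by rewrite /D /a; ring.
  by rewrite -subr_ge0 E sqr_ge0.
have D8 : D ^+ 4 <= 8 * P.
  case: (eqVneq m M) => [Emm | Nmm].
    rewrite /D Emm subrr expr0n /=; lra.
  have := @sum_ge2 _ s (fun x => x ^+ 4) m M (fun y => exprn_even_ge0 y (isT : ~~ odd 4)) ms Ms Nmm.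
  rewrite -/(psum 4 s) -HP => H2.
  have E : 8 * (m ^+ 4 + M ^+ 4) - D ^+ 4 = (M + m) ^+ 2 * (5 * (M - m) ^+ 2 + 2 * M ^+ 2 + 2 * m ^+ 2).
    by rewrite /D; ring.
  have : 0 <= 8 * (m ^+ 4 + M ^+ 4) - D ^+ 4.
    rewrite E; apply: mulr_ge0; first exact: sqr_ge0.
    by apply: addr_ge0; [apply: addr_ge0|]; apply: mulr_ge0 => //; exact: sqr_ge0.
  lra.
split.
  apply: le_trans spn_lo; rewrite /root4; apply: root4_le => //.
  rewrite Key.
  have -> : 24 / n%:R * (P / 2) = (12 * P) / n%:R.
    by field; rewrite lt0r_neq0.
  rewrite ler_pdivrMr //.
  have := ler_wpM2r (ltW nR) aD.
  have := ler_wpM2r (ltW nR) (ltW (ltr0Sn R 11)).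
  nra.
apply: (le_trans spn_hi); rewrite /root4 Key.
have : D / 2 <= Num.sqrt (Num.sqrt (P / 2)).
  apply: root4_ge; first by lra.
  rewrite expr_div_n; lra.
lra.
Qed.
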